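(* Let $\chi$ and $\eta$ be Dirichlet characters mod $N$ with $\chi$ primitive. Then $J_{\mathfrak J_2}(\chi,\eta)=N^4J(\chi,\chi,\eta)$.
   Context: $\mathfrak C_\mathbb Q$ is the (positive definite) Cayley octonion algebra with involution $x\mapsto\bar x$ and norm $N(x)=x\bar x$, and $\mathfrak o$ the order of integral Cayley numbers ($N|_\mathfrak o$ is a positive definite integral quadratic form of rank $8$ whose Gram matrix lies in $\frac12GL_8(\mathbb Z)$). $\mathfrak J_2(\mathbb Z)$ is the set of matrices $B=\begin{pmatrix}a&x\\ \bar x&b\end{pmatrix}$, $a,b\in\mathbb Z$, $x\in\mathfrak o$, with $\det B=ab-N(x)$, $\mathrm{Tr}(B)=a+b$, and $\mathfrak J_2(\mathbb Z/N\mathbb Z)=\mathfrak J_2(\mathbb Z)\otimes\mathbb Z/N\mathbb Z$. Dirichlet characters vanish on non-units mod $N$. $J_{\mathfrak J_2}(\chi_1,\chi_2)=\sum_{B\in\mathfrak J_2(\mathbb Z/N\mathbb Z)}\chi_1(\det B)\chi_2(1-\mathrm{Tr}(B))$ and $J(\chi_1,\chi_2,\chi_3)=\sum_{a_1+a_2+a_3=1,\ a_i\in\mathbb Z/N\mathbb Z}\chi_1(a_1)\chi_2(a_2)\chi_3(a_3)$. *)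

(* Defs.v *)
From mathcomp Require Import all_boot all_order all_algebra all_field.
Set Implicit Arguments. Unset Strict Implicit. Unset Printing Implicit Defensive.
Import Order.TTheory GRing.Theory Num.Theory.
Local Open Scope ring_scope.

(** * The Cayley octonion algebra C_Q (positive definite), coordinates
    w.r.t. the standard basis e_0 = 1, e_1, ..., e_7, with the Fano-plane
    multiplication rule  e_i e_{i+1} = e_{i+3}  (indices 1..7 taken mod 7). *)

Definition oct := {ffun 'I_8 -> rat}.

(* octtab i j = (s, k) means  e_i * e_j = s e_k. *)
Definition octtab : seq (seq (int * nat)) :=
 [:: [:: (1%Z, 0%N); (1%Z, 1%N); (1%Z, 2%N); (1%Z, 3%N); (1%Z, 4%N); (1%Z, 5%N); (1%Z, 6%N); (1%Z, 7%N)];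
    [:: (1%Z, 1%N); ((-1)%Z, 0%N); (1%Z, 4%N); (1%Z, 7%N); ((-1)%Z, 2%N); (1%Z, 6%N); ((-1)%Z, 5%N); ((-1)%Z, 3%N)];
    [:: (1%Z, 2%N); ((-1)%Z, 4%N); ((-1)%Z, 0%N); (1%Z, 5%N); (1%Z, 1%N); ((-1)%Z, 3%N); (1%Z, 7%N); ((-1)%Z, 6%N)];
    [:: (1%Z, 3%N); ((-1)%Z, 7%N); ((-1)%Z, 5%N); ((-1)%Z, 0%N); (1%Z, 6%N); (1%Z, 2%N); ((-1)%Z, 4%N); (1%Z, 1%N)];
    [:: (1%Z, 4%N); (1%Z, 2%N); ((-1)%Z, 1%N); ((-1)%Z, 6%N); ((-1)%Z, 0%N); (1%Z, 7%N); (1%Z, 3%N); ((-1)%Z, 5%N)];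
    [:: (1%Z, 5%N); ((-1)%Z, 6%N); (1%Z, 3%N); ((-1)%Z, 2%N); ((-1)%Z, 7%N); ((-1)%Z, 0%N); (1%Z, 1%N); (1%Z, 4%N)];
    [:: (1%Z, 6%N); (1%Z, 5%N); ((-1)%Z, 7%N); (1%Z, 4%N); ((-1)%Z, 3%N); ((-1)%Z, 1%N); ((-1)%Z, 0%N); (1%Z, 2%N)];
    [:: (1%Z, 7%N); (1%Z, 3%N); (1%Z, 6%N); ((-1)%Z, 1%N); (1%Z, 5%N); ((-1)%Z, 4%N); ((-1)%Z, 2%N); ((-1)%Z, 0%N)]].

Definition octsgn (i j : 'I_8) : int := (nth (0%Z, 0%N) (nth [::] octtab i) j).1.
Definition octidx (i j : 'I_8) : nat := (nth (0%Z, 0%N) (nth [::] octtab i) j).2.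

Definition octmul (x y : oct) : oct :=
  [ffun k : 'I_8 => \sum_(i < 8) \sum_(j < 8)
      (if octidx i j == k then (octsgn i j)%:~R * x i * y j else 0)].

Definition octconj (x : oct) : oct :=
  [ffun k : 'I_8 => if k == ord0 then x k else - x k].

Definition octN (x : oct) : rat := octmul x (octconj x) ord0.

(** * The order o of integral Cayley numbers (one of Coxeter's seven maximal
    orders for this multiplication table), given by an explicit Z-basis:
    e_0, e_1, e_2, e_3, (e0+e1+e3+e7)/2, (e0+e2+e5+e7)/2, (e0+e3+e4+e5)/2,
    (e0+e4+e6+e7)/2.  o = Z-span of these. *)
Definition obasis_supp : seq (seq nat) :=
  [:: [:: 0]; [:: 1]; [:: 2]; [:: 3];
      [:: 0; 1; 3; 7]; [:: 0; 2; 5; 7]; [:: 0; 3; 4; 5]; [:: 0; 4; 6; 7]]%N.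

Definition obasis (i : 'I_8) : oct :=
  [ffun k : 'I_8 => if (k : nat) \in nth [::] obasis_supp i then
                      (if (i < 4)%N then 1 else 2%:R^-1) else 0].

Definition oelt (c : 'I_8 -> int) : oct := \sum_(i < 8) obasis i *~ c i.

Definition in_o (x : oct) : Prop := exists c : 'I_8 -> int, x = oelt c.

Definition dirichlet_char (N : nat) (chi : int -> algC) : Prop :=
  [/\ chi 1 = 1,
      (forall m n : int, chi (m * n) = chi m * chi n),
      (forall n : int, chi (n + N%:Z) = chi n) &
      (forall n : int, (chi n != 0) = coprimez n N)].

(* chi is primitive: it is not induced from a character mod any proper
   divisor d of N (i.e. its conductor is N). *)
Definition primitive_char (N : nat) (chi : int -> algC) : Prop :=
  forall d : nat, (d %| N)%N -> (d < N)%N ->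
    exists n : int, [/\ coprimez n N, (n == 1 %[mod d%:Z])%Z & chi n != 1].

(** An element B = (a x; bar x b) of
    J_2(Z/NZ) = J_2(Z) (x) Z/NZ is given by a, b in Z/NZ (represented by
    'I_N) and x in o/No (represented by its coordinates c in ('I_N)^8
    w.r.t. the Z-basis obasis of o).  The values det B = ab - N(x) and
    1 - Tr B = 1 - a - b are computed on integer lifts; chi, eta are
    N-periodic so only their classes mod N matter. *)
Definition J2_det (N : nat) (a b : 'I_N) (c : {ffun 'I_8 -> 'I_N}) : int :=
  (a%:Z * b%:Z - numq (octN (oelt (fun i => (c i : nat)%:Z))))%R.

Definition J_J2 (N : nat) (chi1 chi2 : int -> algC) : algC :=
  \sum_(a : 'I_N) \sum_(b : 'I_N) \sum_(c : {ffun 'I_8 -> 'I_N})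
     chi1 (J2_det a b c) * chi2 (1 - (a%:Z + b%:Z))%R.

Definition J3 (N : nat) (chi1 chi2 chi3 : int -> algC) : algC :=
  \sum_(a1 : 'I_N) \sum_(a2 : 'I_N)
    \sum_(a3 : 'I_N | ((a1%:Z + a2%:Z + a3%:Z)%R == 1 %[mod N%:Z])%Z)
       chi1 a1%:Z * chi2 a2%:Z * chi3 a3%:Z.

(* Main.v *)
Require Import Defs.
From mathcomp Require Import all_boot all_order all_algebra all_field.
From mathcomp Require Import zify ring.
From Stdlib Require Import FunctionalExtensionality.
Import GRing.Theory Num.Theory.
Local Open Scope ring_scope.

Definition o0 : 'I_8 := @Ordinal 8 0 isT.
Definition o1 : 'I_8 := @Ordinal 8 1 isT.
Definition o2 : 'I_8 := @Ordinal 8 2 isT.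
Definition o3 : 'I_8 := @Ordinal 8 3 isT.
Definition o4 : 'I_8 := @Ordinal 8 4 isT.
Definition o5 : 'I_8 := @Ordinal 8 5 isT.
Definition o6 : 'I_8 := @Ordinal 8 6 isT.
Definition o7 : 'I_8 := @Ordinal 8 7 isT.

Definition vec8 (a0 a1 a2 a3 a4 a5 a6 a7 : int) : 'I_8 -> int :=
  fun i => match nat_of_ord i with 0 => a0 | 1 => a1 | 2 => a2 | 3 => a3
   | 4 => a4 | 5 => a5 | 6 => a6 | _ => a7 end%N.

Lemma forall8 (P : 'I_8 -> Prop) :
  P o0 -> P o1 -> P o2 -> P o3 -> P o4 -> P o5 -> P o6 -> P o7 -> forall i, P i.
Proof.
move=> H0 H1 H2 H3 H4 H5 H6 H7 [[|[|[|[|[|[|[|[|//]]]]]]]] Hi];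
 (have -> : Hi = isT by apply: eq_irrelevance); assumption.
Qed.

Section V8.
Variables a0 a1 a2 a3 a4 a5 a6 a7 : int.
Lemma v0 : vec8 a0 a1 a2 a3 a4 a5 a6 a7 o0 = a0. Proof. by []. Qed.
Lemma v1 : vec8 a0 a1 a2 a3 a4 a5 a6 a7 o1 = a1. Proof. by []. Qed.
Lemma v2 : vec8 a0 a1 a2 a3 a4 a5 a6 a7 o2 = a2. Proof. by []. Qed.
Lemma v3 : vec8 a0 a1 a2 a3 a4 a5 a6 a7 o3 = a3. Proof. by []. Qed.
Lemma v4 : vec8 a0 a1 a2 a3 a4 a5 a6 a7 o4 = a4. Proof. by []. Qed.
Lemma v5 : vec8 a0 a1 a2 a3 a4 a5 a6 a7 o5 = a5. Proof. by []. Qed.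
Lemma v6 : vec8 a0 a1 a2 a3 a4 a5 a6 a7 o6 = a6. Proof. by []. Qed.
Lemma v7 : vec8 a0 a1 a2 a3 a4 a5 a6 a7 o7 = a7. Proof. by []. Qed.
End V8.
Definition vE := (v0, v1, v2, v3, v4, v5, v6, v7).

Lemma sum8 (V : nmodType) (F : 'I_8 -> V) :
  \sum_(i < 8) F i = F o0 + F o1 + F o2 + F o3 + F o4 + F o5 + F o6 + F o7.
Proof.
rewrite !big_ord_recr big_ord0 /= add0r.
by congr (_ + _ + _ + _ + _ + _ + _ + _); congr F; apply: val_inj.
Qed.
Definition Q8 (a0 a1 a2 a3 a4 a5 a6 a7 : int) : int :=
  a0 * a0 + a1 * a1 + a2 * a2 + a3 * a3 + a4 * a4 + a5 * a5 + a6 * a6 + a7 * a7 + a0 * a4 + a0 * a5 + a0 * a6 + a0 * a7 + a1 * a4 + a2 * a5 + a3 * a4 + a3 * a6 + a4 * a5 + a4 * a6 + a4 * a7 + a5 * a6 + a5 * a7 + a6 * a7.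

Definition Gv (x : 'I_8 -> int) : 'I_8 -> int :=
  vec8 (2 * (x o0) + (x o4) + (x o5) + (x o6) + (x o7)) (2 * (x o1) + (x o4)) (2 * (x o2) + (x o5)) (2 * (x o3) + (x o4) + (x o6)) ((x o0) + (x o1) + (x o3) + 2 * (x o4) + (x o5) + (x o6) + (x o7)) ((x o0) + (x o2) + (x o4) + 2 * (x o5) + (x o6) + (x o7)) ((x o0) + (x o3) + (x o4) + (x o5) + 2 * (x o6) + (x o7)) ((x o0) + (x o4) + (x o5) + (x o6) + 2 * (x o7)).

Definition Giv (x : 'I_8 -> int) : 'I_8 -> int :=
  vec8 (2 * (x o0) + 2 * (x o1) - (x o2) + 3 * (x o3) - 4 * (x o4) + 2 * (x o5) - 2 * (x o6) + (x o7)) (2 * (x o0) + 4 * (x o1) - 2 * (x o2) + 5 * (x o3) - 7 * (x o4) + 4 * (x o5) - 3 * (x o6) + 2 * (x o7)) (- (x o0) - 2 * (x o1) + 2 * (x o2) - 3 * (x o3) + 4 * (x o4) - 3 * (x o5) + 2 * (x o6) - (x o7)) (3 * (x o0) + 5 * (x o1) - 3 * (x o2) + 8 * (x o3) - 10 * (x o4) + 6 * (x o5) - 5 * (x o6) + 3 * (x o7)) (- 4 * (x o0) - 7 * (x o1) + 4 * (x o2) - 10 * (x o3) + 14 * (x o4) - 8 * (x o5) + 6 * (x o6) - 4 * (x o7)) (2 * (x o0) + 4 * (x o1) - 3 * (x o2) + 6 * (x o3) - 8 * (x o4) + 6 * (x o5) - 4 * (x o6) + 2 * (x o7)) (- 2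 * (x o0) - 3 * (x o1) + 2 * (x o2) - 5 * (x o3) + 6 * (x o4) - 4 * (x o5) + 4 * (x o6) - 2 * (x o7)) ((x o0) + 2 * (x o1) - (x o2) + 3 * (x o3) - 4 * (x o4) + 2 * (x o5) - 2 * (x o6) + 2 * (x o7)).

Definition Mv (s0 s1 s2 s3 : int) (y : 'I_8 -> int) : 'I_8 -> int :=
  vec8 ((s0 * y o0) + (-1 * s1 * y o1) + (-1 * s2 * y o1) + (-1 * s3 * y o1) + (s1 * y o2) + (-1 * s2 * y o2) + (s1 * y o3) + (-1 * s3 * y o3) + (-1 * s3 * y o4) + (-1 * s3 * y o6) + (s2 * y o7) + (-1 * s3 * y o7)) ((s1 * y o0) + (s0 * y o1) + (-1 * s2 * y o1) + (-1 * s3 * y o1) + (s1 * y o2) + (s3 * y o2) + (s1 * y o3) + (-1 * s2 * y o3) + (s1 * y o4) + (-1 * s3 * y o4) + (s2 * y o5) + (-1 * s2 * y o6) + (-1 * s3 * y o6) + (s1 * y o7) + (s2 * y o7) + (-2 * s3 * y o7)) ((s2 * y o0) + (s2 * y o1) + (s0 * y o2) + (-1 * s1 * y o2) + (-1 * s3 * y o2) + (s2 * y o3) + (s2 * y o4) + (-1 * s3 * y o5) + (s1 * y o6) + (s2 * y o6) + (s3 * y o7)) ((s3 * y o0) + (-2 * s2 * y o1) + (-1 * s3 * y o1) + (2 * s1 * y o2) + (s3 * y o2) + (s0 * y o3) + (s1 * y o3) + (-1 * s2 * y o3) + (s1 * y o4) + (2 * s2 * y o5) + (s3 * y o5) + (-1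 * s1 * y o6) + (-1 * s3 * y o6) + (s1 * y o7) + (2 * s2 * y o7) + (-2 * s3 * y o7)) ((2 * s2 * y o1) + (2 * s3 * y o1) + (-2 * s1 * y o2) + (-2 * s3 * y o2) + (-2 * s1 * y o3) + (2 * s2 * y o3) + (s0 * y o4) + (-1 * s1 * y o4) + (s3 * y o4) + (s1 * y o5) + (-2 * s2 * y o5) + (-1 * s3 * y o5) + (s1 * y o6) + (s2 * y o6) + (2 * s3 * y o6) + (-1 * s1 * y o7) + (-3 * s2 * y o7) + (3 * s3 * y o7)) ((-2 * s2 * y o1) + (2 * s1 * y o2) + (2 * s3 * y o2) + (-2 * s2 * y o3) + (-1 * s2 * y o4) + (s0 * y o5) + (s2 * y o5) + (s3 * y o5) + (-1 * s1 * y o6) + (-1 * s2 * y o6) + (-1 * s3 * y o6) + (s1 * y o7) + (s2 * y o7) + (-2 * s3 * y o7)) ((2 * s2 * y o1) + (-2 * s1 * y o2) + (-1 * s2 * y o5) + (s0 * y o6) + (s1 * y o6) + (s3 * y o6) + (-1 * s2 * y o7) + (2 * s3 * y o7)) ((s2 * y o4) + (-1 * s1 * y o5) + (s2 * y o5) + (-1 * s1 * y o6) + (-1 * s3 * y o6) + (s0 * y o7) + (s2 * y o7) + (-1 * s3 * y o7)).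

Definition lam (s0 s1 s2 s3 : int) (x : 'I_8 -> int) : 'I_8 -> int :=
  vec8 ((s0) * Gv x o0 + (s1) * Gv x o1 + (s2) * Gv x o2 + (s3) * Gv x o3) ((-1 * s1) * Gv x o0 + (-1 * s2) * Gv x o0 + (-1 * s3) * Gv x o0 + (s0) * Gv x o1 + (-1 * s2) * Gv x o1 + (-1 * s3) * Gv x o1 + (s2) * Gv x o2 + (-2 * s2) * Gv x o3 + (-1 * s3) * Gv x o3 + (2 * s2) * Gv x o4 + (2 * s3) * Gv x o4 + (-2 * s2) * Gv x o5 + (2 * s2) * Gv x o6) ((s1) * Gv x o0 + (-1 * s2) * Gv x o0 + (s1) * Gv x o1 + (s3) * Gv x o1 + (s0) * Gv x o2 + (-1 * s1) * Gv x o2 + (-1 * s3) * Gv x o2 + (2 * s1) * Gv x o3 + (s3) * Gv x o3 + (-2 * s1) * Gv x o4 + (-2 * s3) * Gv x o4 + (2 * s1) * Gv x o5 + (2 * s3) * Gv x o5 + (-2 * s1) * Gv x o6) ((s1) * Gv x o0 + (-1 * s3) * Gv x o0 + (s1) * Gv x o1 + (-1 * s2) * Gv x o1 + (s2) * Gv x o2 + (s0) * Gv x o3 + (s1) * Gv x o3 + (-1 * s2) * Gv x o3 + (-2 * s1) * Gv x o4 + (2 * s2) * Gv x o4 + (-2 * s2) * Gv x o5) ((-1 * s3) * Gv x o0 + (s1) * Gv x o1 + (-1 * s3) * Gv x o1 + (s2) * Gv x o2 + (s1) * Gv x o3 + (s0) * Gv x o4 + (-1 * s1) * Gv x o4 +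 (s3) * Gv x o4 + (-1 * s2) * Gv x o5 + (s2) * Gv x o7) ((s2) * Gv x o1 + (-1 * s3) * Gv x o2 + (2 * s2) * Gv x o3 + (s3) * Gv x o3 + (s1) * Gv x o4 + (-2 * s2) * Gv x o4 + (-1 * s3) * Gv x o4 + (s0) * Gv x o5 + (s2) * Gv x o5 + (s3) * Gv x o5 + (-1 * s2) * Gv x o6 + (-1 * s1) * Gv x o7 + (s2) * Gv x o7) ((-1 * s3) * Gv x o0 + (-1 * s2) * Gv x o1 + (-1 * s3) * Gv x o1 + (s1) * Gv x o2 + (s2) * Gv x o2 + (-1 * s1) * Gv x o3 + (-1 * s3) * Gv x o3 + (s1) * Gv x o4 + (s2) * Gv x o4 + (2 * s3) * Gv x o4 + (-1 * s1) * Gv x o5 + (-1 * s2) * Gv x o5 + (-1 * s3) * Gv x o5 + (s0) * Gv x o6 + (s1) * Gv x o6 + (s3) * Gv x o6 + (-1 * s1) * Gv x o7 + (-1 * s3) * Gv x o7) ((s2) * Gv x o0 + (-1 * s3) * Gv x o0 + (s1) * Gv x o1 + (s2) * Gv x o1 + (-2 * s3) * Gv x o1 + (s3) * Gv x o2 + (s1) * Gv x o3 + (2 * s2) * Gv x o3 + (-2 * s3) * Gv x o3 + (-1 * s1) * Gv x o4 + (-3 * s2) * Gv x o4 + (3 * s3) * Gv x o4 + (s1) * Gv x o5 + (s2) * Gv x o5 + (-2 * s3) * Gv x o5 + (-1 * s2) * Gv x o6 + (2 * s3) * Gv x o6 + (s0) * Gv x o7 + (s2) * Gv x o7 + (-1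 * s3) * Gv x o7).

Definition Q (u : 'I_8 -> int) : int :=
  Q8 (u o0) (u o1) (u o2) (u o3) (u o4) (u o5) (u o6) (u o7).




Definition vadd (u v : 'I_8 -> int) : 'I_8 -> int := fun i => u i + v i.
Definition dot (u v : 'I_8 -> int) : int := \sum_(i < 8) u i * v i.
Definition ssq (s0 s1 s2 s3 : int) : int := s0*s0+s1*s1+s2*s2+s3*s3.

Ltac unf := cbv beta iota delta [Q Q8 vadd Mv lam Gv Giv ssq vec8 o0 o1 o2 o3 o4 o5 o6 o7 nat_of_ord].

Lemma Esim s0 s1 s2 s3 y : Q (Mv s0 s1 s2 s3 y) = Q y * ssq s0 s1 s2 s3.
Proof. unf; ring. Qed.

Lemma Eshift s0 s1 s2 s3 x y :
  Q (vadd x (Mv s0 s1 s2 s3 y)) = Q x + dot (lam s0 s1 s2 s3 x) y + ssq s0 s1 s2 s3 * Q y.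
Proof. rewrite /dot sum8; unf; ring. Qed.

Lemma EGl s0 s1 s2 s3 x i : Giv (lam s0 s1 s2 s3 x) i = Mv s0 (-s1) (-s2) (-s3) x i.
Proof. move: i; apply: forall8; unf; ring. Qed.

Lemma EGi d i : Giv (Gv d) i = d i.
Proof. move: i; apply: forall8; unf; ring. Qed.

Lemma Eper c u w : Q (vadd u (fun i => c * w i)) = Q u + c * (dot (Gv u) w + c * Q w).
Proof. rewrite /dot sum8; unf; ring. Qed.

Lemma Ediff x y z : Q (vadd x z) - Q (vadd y z) = Q x - Q y + dot (Gv (fun i => x i - y i)) z.
Proof. rewrite /dot sum8; unf; ring. Qed.

Lemma EGv_scale c w i : Gv (fun j => c * w j) i = c * Gv w i.
Proof. move: i; apply: forall8; unf; ring. Qed.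

Lemma EGi_scale c w i : Giv (fun j => c * w j) i = c * Giv w i.
Proof. move: i; apply: forall8; unf; ring. Qed.

Lemma Ehom c w : Q (fun i => c * w i) = c * c * Q w.
Proof. unf; ring. Qed.

Lemma octidx_eq0 i j : (octidx i j == (ord0 : 'I_8) :> nat) = (i == j).
Proof. by move: i; apply: forall8; move: j; apply: forall8. Qed.

Lemma octsgn_ii i : octsgn i i = if i == (ord0 : 'I_8) then 1 else -1.
Proof. by move: i; apply: forall8. Qed.

Lemma octN_sq (x : oct) : octN x = \sum_(k < 8) x k * x k.
Proof.
rewrite /octN /octmul ffunE; apply: eq_bigr => i _.
rewrite (bigD1 i) //= big1 => [|j ji]; last by rewrite octidx_eq0 eq_sym (negbTE ji).
rewrite octidx_eq0 eqxx octsgn_ii /octconj ffunE addr0.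
by case: (i == ord0); ring.
Qed.

Lemma oelt_coord u k : oelt u k = \sum_(i < 8) obasis i k * (u i)%:~R.
Proof. by rewrite /oelt sum_ffunE; apply: eq_bigr => i _; rewrite ffunMzE mulrzr. Qed.

Lemma numq_octN (u : 'I_8 -> int) : numq (octN (oelt u)) = Q u.
Proof.
suff -> : octN (oelt u) = (Q u)%:~R by rewrite numq_int.
rewrite octN_sq sum8 !oelt_coord !sum8 /obasis !ffunE /=.
unf. rewrite !(rmorphD, rmorphM) /=.
by field.
Qed.

Lemma sq_inj_mod (p h a b : nat) : prime p -> (p = h.*2.+1)%N -> (a <= h)%N -> (b <= h)%N ->
  (a * a = b * b %[mod p])%N -> a = b.
Proof.
move=> pp ph ah bh.
wlog ba : a b ah bh / (b <= a)%N => [W|].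
  by case/orP: (leq_total b a) => H E; [apply: W | symmetry; apply: W].
move=> /eqP; rewrite eqn_mod_dvd; last by apply: leq_mul.
have -> : (a * a - b * b = (a - b) * (a + b))%N by rewrite -subn_sqr.
rewrite Euclid_dvdM // => /orP [] /(dvdn_leq _) H.
- have [//|ab] := eqVneq a b.
  have : (p <= a - b)%N by apply: H; move: ab => /eqP; lia.
  lia.
- have [//|ab] := eqVneq a b.
  have : (p <= a + b)%N by apply: H; move: ab => /eqP; lia.
  lia.
Qed.

Arguments sq_inj_mod {p h a b}.

Lemma pigeon_sq (p : nat) : prime p -> odd p ->
  exists x y : nat, [/\ (x <= p./2)%N, (y <= p./2)%N & (p %| x * x + y * y + 1)%N].
Proof.
move=> pp op; set h := p./2.
have ph : p = h.*2.+1 by rewrite -[p in LHS]odd_double_half op add1n.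
have p0 : (0 < p)%N by rewrite ph.
pose f (z : 'I_h.+1 + 'I_h.+1) : 'I_p := match z with
  | inl a => Ordinal (ltn_pmod (a * a) p0)
  | inr b => Ordinal (ltn_pmod (p * p - (b * b).+1) p0) end.
have lb (b : 'I_h.+1) : ((b * b).+1 <= p * p)%N.
  have := ltn_ord b; rewrite ph => hb. nia.
have [/injectiveP inj|/injectivePn [z1 [z2 nz ef]]] := boolP (injectiveb f).
  have := leq_card f inj; rewrite card_sum !card_ord ph; lia.
have key (a b : 'I_h.+1) : (a * a = p * p - (b * b).+1 %[mod p])%N ->
    exists x y : nat, [/\ (x <= h)%N, (y <= h)%N & (p %| x * x + y * y + 1)%N].
  move=> E; exists a, b; split; [by rewrite -ltnS ltn_ord | by rewrite -ltnS ltn_ord|].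
  have : (a * a + (b * b).+1 == p * p - (b * b).+1 + (b * b).+1 %[mod p])%N by rewrite eqn_modDr; apply/eqP.
  by rewrite subnK // modnMl addnS addn1.
have ih (a : 'I_h.+1) : (a <= h)%N by rewrite -ltnS ltn_ord.
move: nz ef; case: z1 => [a|a]; case: z2 => [b|b] //= nz /(congr1 val) /= E.
- by move: nz; rewrite (val_inj (sq_inj_mod pp ph (ih a) (ih b) E)) eqxx.
- exact (key a b E).
- exact: (key b a (esym E)).
- move: nz; suff -> : a = b by rewrite eqxx.
  apply: val_inj; symmetry; apply: (sq_inj_mod pp ph (ih b) (ih a)).
  have : (p * p - (a * a).+1 + ((a * a).+1 + (b*b).+1) == p * p - (b * b).+1 + ((a * a).+1 + (b*b).+1) %[mod p])%N
    by rewrite eqn_modDr; apply/eqP.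
  rewrite addnA subnK // [((a * a).+1 + _)%N]addnC addnA subnK // eqn_modDl -(addn1 (b * b)) -(addn1 (a * a)) eqn_modDr.
  by move/eqP.
Qed.

Definition s4 (a b c d : int) : int := a * a + b * b + c * c + d * d.

Lemma par (x : int) : exists q e : int, x = 2 * q + e /\ (e = 0 \/ e = 1).
Proof. exists (x %/ 2)%Z, (x %% 2)%Z; lia. Qed.

Lemma euler4 a0 a1 a2 a3 b0 b1 b2 b3 :
  s4 a0 a1 a2 a3 * s4 b0 b1 b2 b3 =
  s4 (a0*b0 + a1*b1 + a2*b2 + a3*b3) (a0*b1 - a1*b0 + a2*b3 - a3*b2)
     (a0*b2 - a1*b3 - a2*b0 + a3*b1) (a0*b3 + a1*b2 - a2*b1 - a3*b0).
Proof. rewrite /s4; ring. Qed.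

Lemma s4_ge0 a b c d : 0 <= s4 a b c d.
Proof. by rewrite /s4 !addr_ge0 // sqr_ge0. Qed.

Lemma s4_eq0 a b c d : s4 a b c d = 0 -> [/\ a = 0, b = 0, c = 0 & d = 0].
Proof. rewrite /s4 => E; split; nia. Qed.

Lemma sq_le (a H : int) : - H <= a <= H -> a * a <= H * H.
Proof. nia. Qed.

Lemma r_lt (M H r : int) : M = 2 * H + 1 -> 0 < H -> M * r <= 4 * (H * H) -> r < M.
Proof. nia. Qed.

Lemma descent (p : nat) : prime p -> forall m : nat, (0 < m)%N -> (m < p)%N ->
  forall x0 x1 x2 x3 : int, (m * p)%N%:Z = s4 x0 x1 x2 x3 ->
  exists a b c d : int, p%:Z = s4 a b c d.
Proof.
move=> pp; elim/ltn_ind => m IH m0 mp x0 x1 x2 x3 E.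
have [m1|m1] := eqVneq m 1%N.
  by subst; exists x0, x1, x2, x3; rewrite -E mul1n.
have m2 : (1 < m)%N by move: m1 => /eqP; lia.
case/boolP: (odd m) => om; last first.
  have mk : m = (m./2).*2 by rewrite -[m in LHS]odd_double_half (negbTE om).
  set k := m./2 in mk.
  have k0 : (0 < k)%N by lia.
  have km : (k < m)%N by lia.
  move: E; rewrite mk /s4 => E.
  have [q0 [e0 [h0 he0]]] := par x0.
  have [q1 [e1 [h1 he1]]] := par x1.
  have [q2 [e2 [h2 he2]]] := par x2.
  have [q3 [e3 [h3 he3]]] := par x3.
  have ev : exists j, e0 + e1 + e2 + e3 = 2 * j.
    exists (k%:Z * p%:Z - 2 * (q0*q0 + q0*e0 + q1*q1 + q1*e1 + q2*q2 + q2*e2 + q3*q3 + q3*e3)).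
    move: E; rewrite h0 h1 h2 h3.
    case: he0 => ->; case: he1 => ->; case: he2 => ->; case: he3 => ->; lia.
  case: ev => j hj.
  have [H|[H|H]] : (e0 = e1 /\ e2 = e3) \/ (e0 = e2 /\ e1 = e3) \/ (e0 = e3 /\ e1 = e2) by lia.
  - apply: (IH k km k0 (ltn_trans km mp) (x1 + (q0 - q1)) (q0 - q1) (x3 + (q2 - q3)) (q2 - q3)).
    rewrite /s4; move: E; rewrite h0 h1 h2 h3; case: H => -> ->; lia.
  - apply: (IH k km k0 (ltn_trans km mp) (x2 + (q0 - q2)) (q0 - q2) (x3 + (q1 - q3)) (q1 - q3)).
    rewrite /s4; move: E; rewrite h0 h1 h2 h3; case: H => -> ->; lia.
  - apply: (IH k km k0 (ltn_trans km mp) (x3 + (q0 - q3)) (q0 - q3) (x2 + (q1 - q2)) (q1 - q2)).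
    rewrite /s4; move: E; rewrite h0 h1 h2 h3; case: H => -> ->; lia.
have mh : m = (m./2).*2.+1 by rewrite -[m in LHS]odd_double_half om.
set h := m./2 in mh.
pose M : int := m%:Z; pose H : int := h%:Z.
have MH : M = 2 * H + 1 by rewrite /M /H mh; lia.
have H0 : 0 < H by rewrite /H; lia.
pose t i := (- ((i + H) %/ M)%Z).
have bnd i : - H <= i + M * t i <= H by rewrite /t; lia.
set t0 := t x0; set t1 := t x1; set t2 := t x2; set t3 := t x3.
have b0 := bnd x0; have b1 := bnd x1; have b2 := bnd x2; have b3 := bnd x3.
rewrite -/t0 in b0; rewrite -/t1 in b1; rewrite -/t2 in b2; rewrite -/t3 in b3.
clearbody t0 t1 t2 t3.
pose P : int := p%:Z.
have EM : s4 x0 x1 x2 x3 = M * P by rewrite -E /M /P; lia.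
pose r : int := P + 2 * (x0*t0 + x1*t1 + x2*t2 + x3*t3) + M * (t0*t0 + t1*t1 + t2*t2 + t3*t3).
have Sy : s4 (x0 + M*t0) (x1 + M*t1) (x2 + M*t2) (x3 + M*t3) = M * r.
  by rewrite /r !mulrDr -EM /s4; ring.
have r0 : 0 <= r.
  have := s4_ge0 (x0 + M*t0) (x1 + M*t1) (x2 + M*t2) (x3 + M*t3).
  by rewrite Sy pmulr_rge0 // MH; lia.
have rM : r < M.
  have : s4 (x0 + M*t0) (x1 + M*t1) (x2 + M*t2) (x3 + M*t3) <= 4 * (H * H).
    rewrite /s4 (_ : 4 * (H * H) = H * H + H * H + H * H + H * H); last by ring.
    by rewrite !lerD // sq_le.
  by rewrite Sy; apply: r_lt.
have rn0 : r != 0.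
  apply/eqP => r_0; move: Sy; rewrite r_0 mulr0 => /s4_eq0 [z0 z1 z2 z3].
  have PM : P = M * s4 t0 t1 t2 t3.
    apply: (@mulfI _ M); first by rewrite MH; lia.
    have e0 : x0 = - (M * t0) by lia.
    have e1 : x1 = - (M * t1) by lia.
    have e2 : x2 = - (M * t2) by lia.
    have e3 : x3 = - (M * t3) by lia.
    by rewrite -EM e0 e1 e2 e3 /s4; ring.
  have T0 := s4_ge0 t0 t1 t2 t3.
  have : (m %| p)%N.
    apply/dvdnP; exists (absz (s4 t0 t1 t2 t3)); move: PM T0; rewrite /P /M; set T := s4 _ _ _ _; lia.
  case/primeP: pp => _ /[apply] /orP [] /eqP; lia.
pose w0 := P + (x0*t0 + x1*t1 + x2*t2 + x3*t3).
pose w1 := x0*t1 - x1*t0 + x2*t3 - x3*t2.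
pose w2 := x0*t2 - x1*t3 - x2*t0 + x3*t1.
pose w3 := x0*t3 + x1*t2 - x2*t1 - x3*t0.
have Ew : s4 w0 w1 w2 w3 = r * P.
  apply: (@mulfI _ (M * M)); first by rewrite MH; nia.
  transitivity (s4 (M*w0) (M*w1) (M*w2) (M*w3)); first by rewrite /s4; ring.
  have -> : M * w0 = x0*(x0 + M*t0) + x1*(x1 + M*t1) + x2*(x2 + M*t2) + x3*(x3 + M*t3) by rewrite /w0 mulrDr -EM /s4; ring.
  have -> : M * w1 = x0*(x1 + M*t1) - x1*(x0 + M*t0) + x2*(x3 + M*t3) - x3*(x2 + M*t2) by rewrite /w1; ring.
  have -> : M * w2 = x0*(x2 + M*t2) - x1*(x3 + M*t3) - x2*(x0 + M*t0) + x3*(x1 + M*t1) by rewrite /w2; ring.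
  have -> : M * w3 = x0*(x3 + M*t3) + x1*(x2 + M*t2) - x2*(x1 + M*t1) - x3*(x0 + M*t0) by rewrite /w3; ring.
  rewrite -euler4 EM Sy; ring.
apply: (IH (absz r) _ _ _ w0 w1 w2 w3); try lia.
Qed.

Lemma four_sq_prime (p : nat) : prime p -> exists a b c d : int, p%:Z = s4 a b c d.
Proof.
move=> pp; case/boolP: (odd p) => op; last first.
  have p2 : p = 2%N.
    have : (2 %| p)%N by rewrite dvdn2 (negbTE op).
    by rewrite (@dvdn_prime2 2 p isT pp) => /eqP.
  by exists 1, 1, 0, 0; rewrite p2 /s4.
have [x [y [hx hy hd]]] := pigeon_sq p pp op.
have p0 : (0 < p)%N by apply: prime_gt0.
case/dvdnP: hd => m hm.
have ph : p = (p./2).*2.+1 by rewrite -[p in LHS]odd_double_half op add1n.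
apply: (@descent p pp m _ _ x%:Z y%:Z 1 0).
- move: hm; case: m => // /eqP; lia.
- have lt : (x * x + y * y + 1 < p * p)%N.
    have p1 := prime_gt1 pp.
    move: hx hy p1; set h := p./2; rewrite ph => hx hy p1.
    have := leq_mul hx hx; have := leq_mul hy hy; nia.
  by rewrite -(ltn_pmul2r p0) -hm.
- by rewrite /s4; lia.
Qed.

Lemma four_sq (n : nat) : exists a b c d : int, n%:Z = s4 a b c d.
Proof.
elim/ltn_ind: n => n IH.
have [n1|n1] := leqP n 1.
  by case: n n1 IH => [|[|]] // _ _; [exists 0, 0, 0, 0 | exists 1, 0, 0, 0].
have pp := pdiv_prime n1.
have [q nq] : exists q, n = (q * pdiv n)%N by apply/dvdnP; apply: pdiv_dvd.
have q0 : (0 < q)%N by move: n1; rewrite nq; case: q {nq} => //.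
have qn : (q < n)%N.
  rewrite nq -[X in (X < _)%N]muln1 ltn_mul2l q0 /=; exact: prime_gt1.
have [a [b [c [d E1]]]] := IH q qn.
have [a' [b' [c' [d' E2]]]] := four_sq_prime _ pp.
rewrite nq PoszM E1 E2 euler4.
by eexists _, _, _, _.
Qed.

Set Implicit Arguments. Unset Strict Implicit.

Lemma chi_per N chi : dirichlet_char N chi -> forall r k, chi (r + N%:Z * k) = chi r.
Proof.
case=> _ _ hp _.
have hn r (k : nat) : chi (r + N%:Z * k%:Z) = chi r.
  elim: k => [|k IH]; first by rewrite mulr0 addr0.
  by rewrite -addn1 PoszD mulrDr mulr1 addrA hp IH.
move=> r [k|k]; first exact: hn.
by rewrite -(hn (r + N%:Z * Negz k) k.+1) -addrA -mulrDr NegzE addNr mulr0 addr0.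
Qed.

Lemma zmodI_lt N (hN : (0 < N)%N) (r : int) : (absz (r %% N%:Z)%Z < N)%N.
Proof.
have h0 : (0 <= (r %% N%:Z)%Z) by apply: modz_ge0; lia.
have h1 : ((r %% N%:Z)%Z < N%:Z) by apply: ltz_pmod; lia.
lia.
Qed.

Definition zmodI N (hN : (0 < N)%N) (r : int) : 'I_N := Ordinal (zmodI_lt hN r).

Lemma zmodIE N (hN : (0 < N)%N) r : ((zmodI hN r : nat) : int) = (r %% N%:Z)%Z.
Proof.
rewrite /zmodI /=.
have h0 : (0 <= (r %% N%:Z)%Z) by apply: modz_ge0; lia.
lia.
Qed.

Lemma small_congr N (a b : nat) (c : int) : (a < N)%N -> (b < N)%N ->
  ((a%:Z + c) %% N%:Z)%Z = ((b%:Z + c) %% N%:Z)%Z -> a = b.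
Proof.
move=> aN bN E.
have : (a%:Z == b%:Z %[mod N%:Z])%Z by rewrite -(eqz_modDr c); apply/eqP.
rewrite !modz_small; try lia.
Qed.

Definition toZ N (x : {ffun 'I_8 -> 'I_N}) : 'I_8 -> int := fun i => (x i : nat)%:Z.

Definition per8 N (f : ('I_8 -> int) -> algC) :=
  forall u w, f (vadd u (fun i => N%:Z * w i)) = f u.

Lemma sum_shift N (hN : (0 < N)%N) (f : ('I_8 -> int) -> algC) (v : 'I_8 -> int) :
  per8 N f ->
  \sum_(x : {ffun 'I_8 -> 'I_N}) f (toZ x) = \sum_(x : {ffun 'I_8 -> 'I_N}) f (vadd (toZ x) v).
Proof.
move=> fP.
pose tau (x : {ffun 'I_8 -> 'I_N}) := [ffun i => zmodI hN ((x i : nat)%:Z + v i)].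
have tau_inj : injective tau.
  move=> x y /ffunP E; apply/ffunP => i; have := E i; rewrite !ffunE.
  move=> /(congr1 (fun o : 'I_N => (o : nat) : int)); rewrite !zmodIE => Ei.
  by apply: val_inj; apply: (small_congr _ _ Ei).
rewrite (reindex_inj tau_inj) /=; apply: eq_bigr => x _.
have -> : toZ (tau x) = vadd (vadd (toZ x) v) (fun i => N%:Z * (- (((x i : nat)%:Z + v i) %/ N%:Z)%Z)).
  apply: functional_extensionality => i; rewrite /toZ /vadd /tau ffunE zmodIE.
  rewrite {2}(divz_eq ((x i : nat)%:Z + v i) N%:Z); ring.
exact: fP.
Qed.

Lemma divz_eq' (m d : int) : m = (m %% d)%Z + d * (m %/ d)%Z.
Proof. by rewrite {1}(divz_eq m d) addrC mulrC. Qed.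

Lemma sum_aff N (hN : (0 < N)%N) (g : int -> algC) (u t : int) :
  (forall r k, g (r + N%:Z * k) = g r) -> coprimez u N%:Z ->
  \sum_(s : 'I_N) g (s : nat)%:Z = \sum_(s : 'I_N) g (u * (s : nat)%:Z + t).
Proof.
move=> gP cu.
pose sg (s : 'I_N) := zmodI hN (u * (s : nat)%:Z + t).
have sg_inj : injective sg.
  move=> s s' /(congr1 (fun o : 'I_N => (o : nat) : int)); rewrite !zmodIE => E.
  have : (u * (s : nat)%:Z == u * (s' : nat)%:Z %[mod N%:Z])%Z by rewrite -(eqz_modDr t); apply/eqP.
  rewrite eqz_mod_dvd -mulrBr Gauss_dvdzr; last by rewrite coprimez_sym.
  move=> /dvdzP [q Hq]; apply: val_inj => /=.
  have sN := ltn_ord s; have sN' := ltn_ord s'.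
  have : q = 0 by nia.
  by move=> q0; move: Hq; rewrite q0 mul0r; lia.
rewrite (reindex_inj sg_inj) /=; apply: eq_bigr => s _.
rewrite zmodIE //.
by rewrite [in RHS](divz_eq' (u * (s : nat)%:Z + t) N%:Z) gP.
Qed.

Lemma csum0 N chi (hN : (0 < N)%N) : dirichlet_char N chi -> primitive_char N chi ->
  forall b k : int, ~~ (N%:Z %| k)%Z -> \sum_(s : 'I_N) chi (b - k * (s : nat)%:Z) = 0.
Proof.
move=> dc pc b k nk.
have cP := chi_per dc.
case: dc => _ cM _ _.
pose g := gcdz k N%:Z.
pose d := absz g.
have dg : d%:Z = g by [].
have dN : (d %| N)%N by have := dvdz_gcdr k N%:Z.
have dk : (d %| absz k)%N by have := dvdz_gcdl k N%:Z.
have dlt : (d < N)%N.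
  rewrite ltn_neqAle (dvdn_leq hN dN) andbT; apply/eqP => dE.
  by case/negP: nk; rewrite -dE; exact: dk.
have [n0 [cop cong neq]] := pc d dN dlt.
move: cong; rewrite eqz_mod_dvd => /dvdzP [r0 hr0].
have [u [v huv]] := Bezoutz k N%:Z.
pose t := u * r0 * b.
set S := \sum_(s : 'I_N) _.
have : chi n0 * S = S.
  rewrite /S mulr_sumr.
  transitivity (\sum_(s : 'I_N) chi (b - k * (n0 * (s : nat)%:Z + (- t)))).
    apply: eq_bigr => s _; rewrite -cM.
    rewrite (_ : n0 * (b - k * (s : nat)%:Z) = (b - k * (n0 * (s : nat)%:Z + (- t))) + N%:Z * (r0 * b * v)).
      by rewrite cP.
    have -> : n0 = r0 * g + 1 by rewrite -dg -hr0; ring.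
    rewrite /g -huv /t; ring.
  symmetry; apply: (sum_aff hN (g := fun r => chi (b - k * r))) => //.
  by move=> r z; rewrite mulrDr opprD addrA (_ : - (k * (N%:Z * z)) = N%:Z * (- (k * z))) ?cP //; ring.
move/eqP; rewrite -subr_eq0 -{2}[S]mul1r -mulrBl mulf_eq0 subr_eq0 (negbTE neq) /=.
by move/eqP.
Qed.

Lemma dot_vadd l u v : dot l (vadd u v) = dot l u + dot l v.
Proof. by rewrite /dot -big_split /=; apply: eq_bigr => i _; rewrite /vadd mulrDr. Qed.

Lemma dot_scale l c w : dot l (fun i => c * w i) = c * dot l w.
Proof. by rewrite /dot mulr_sumr; apply: eq_bigr => i _; rewrite mulrCA. Qed.

Lemma dot_scalel l c w : dot (fun i => c * w i) l = c * dot w l.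
Proof. by rewrite /dot mulr_sumr; apply: eq_bigr => i _; rewrite mulrA. Qed.

Lemma card_ffun8 N : #|{ffun 'I_8 -> 'I_N}| = (N ^ 8)%N.
Proof. by rewrite card_ffun !card_ord. Qed.

Lemma linsum N chi (hN : (0 < N)%N) : dirichlet_char N chi -> primitive_char N chi ->
  forall (l : 'I_8 -> int) (a : int),
  \sum_(y : {ffun 'I_8 -> 'I_N}) chi (a - dot l (toZ y)) =
  if [forall j, (N%:Z %| l j)%Z] then (N ^ 8)%:R * chi a else 0.
Proof.
move=> dc pc l a; have cP := chi_per dc.
case: ifP => [/forallP H | /negbT /forallPn [j nj]].
  transitivity (\sum_(y : {ffun 'I_8 -> 'I_N}) chi a).
    apply: eq_bigr => y _.
    have -> : l = (fun i => N%:Z * (l i %/ N%:Z)%Z).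
      by apply: functional_extensionality => i; rewrite mulrC divzK.
    by rewrite dot_scalel -mulrN cP.
  by rewrite sumr_const card_ffun8 mulr_natl.
set S := \sum_(y : {ffun 'I_8 -> 'I_N}) _.
pose f (u : 'I_8 -> int) := chi (a - dot l u).
have fP : per8 N f.
  by move=> u w; rewrite /f dot_vadd dot_scale opprD addrA -mulrN cP.
have NS : (N%:R : algC) * S = 0.
  transitivity (\sum_(s : 'I_N) S); first by rewrite sumr_const card_ord mulr_natl.
  transitivity (\sum_(s : 'I_N) \sum_(y : {ffun 'I_8 -> 'I_N})
     chi ((a - dot l (toZ y)) - l j * (s : nat)%:Z)).
    apply: eq_bigr => s _.
    rewrite /S (sum_shift hN (f := f) (fun i => if i == j then (s : nat)%:Z else 0) fP).
    apply: eq_bigr => y _; rewrite /f dot_vadd opprD addrA; congr (chi (_ - _)).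
    rewrite /dot (bigD1 j) //= eqxx big1 ?addr0 // => i /negbTE ->; by rewrite mulr0.
  rewrite exchange_big /= big1 // => y _.
  exact: (csum0 hN dc pc).
by move/eqP: NS; rewrite mulf_eq0 pnatr_eq0 (negbTE (lt0n_neq0 hN)) /= => /eqP.
Qed.

Lemma key_div N s0 s1 s2 s3 (hs : N%:Z = ssq s0 s1 s2 s3) (hN : (0 < N)%N) (x : 'I_8 -> int) :
  (forall j, (N%:Z %| lam s0 s1 s2 s3 x j)%Z) -> (N%:Z %| Q x)%Z.
Proof.
move=> H.
pose w j := (lam s0 s1 s2 s3 x j %/ N%:Z)%Z.
have hl : lam s0 s1 s2 s3 x = (fun j => N%:Z * w j).
  by apply: functional_extensionality => j; rewrite mulrC divzK.
have E1 : Q x * ssq s0 s1 s2 s3 = Q (Giv (lam s0 s1 s2 s3 x)).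
  rewrite (_ : Giv (lam s0 s1 s2 s3 x) = Mv s0 (-s1) (-s2) (-s3) x); last first.
    by apply: functional_extensionality => i; rewrite EGl.
  by rewrite Esim /ssq; ring.
have E2 : Q (Giv (lam s0 s1 s2 s3 x)) = N%:Z * N%:Z * Q (Giv w).
  rewrite hl (_ : Giv (fun j => N%:Z * w j) = fun i => N%:Z * Giv w i) ?Ehom //.
  by apply: functional_extensionality => i; rewrite EGi_scale.
rewrite -hs E2 in E1.
have N0 : N%:Z != 0 by lia.
have : Q x = N%:Z * Q (Giv w).
  by apply: (mulIf N0); rewrite E1; ring.
by move=> ->; apply/dvdzP; exists (Q (Giv w)); rewrite mulrC.
Qed.

Definition Fs N (chi : int -> algC) m := \sum_(x : {ffun 'I_8 -> 'I_N}) chi (m - Q (toZ x)).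

Lemma per_Q N chi (dc : dirichlet_char N chi) c : per8 N (fun u => chi (c - Q u)).
Proof.
move=> u w /=; rewrite Eper opprD addrA -mulrN.
exact: chi_per.
Qed.

Lemma N8_neq0 N : (0 < N)%N -> ((N ^ 8)%:R : algC) != 0.
Proof. by move=> hN; rewrite pnatr_eq0 expn_eq0 /=; lia. Qed.

Lemma F_kappa N chi (hN : (0 < N)%N) : dirichlet_char N chi -> primitive_char N chi ->
  forall s0 s1 s2 s3, N%:Z = ssq s0 s1 s2 s3 ->
  exists k : nat, forall m, Fs N chi m = k%:R * chi m.
Proof.
move=> dc pc s0 s1 s2 s3 hs; have cP := chi_per dc.
pose P := [pred x : {ffun 'I_8 -> 'I_N} | [forall j, (N%:Z %| lam s0 s1 s2 s3 (toZ x) j)%Z]].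
exists #|P| => m.
apply: (mulfI (N8_neq0 hN)).
transitivity (\sum_(y : {ffun 'I_8 -> 'I_N}) Fs N chi m).
  by rewrite sumr_const card_ffun8 mulr_natl.
transitivity (\sum_(y : {ffun 'I_8 -> 'I_N}) \sum_(x : {ffun 'I_8 -> 'I_N})
   chi (m - Q (vadd (toZ x) (Mv s0 s1 s2 s3 (toZ y))))).
  apply: eq_bigr => y _; exact: (sum_shift hN _ (per_Q dc m)).
rewrite exchange_big /=.
transitivity (\sum_(x : {ffun 'I_8 -> 'I_N}) \sum_(y : {ffun 'I_8 -> 'I_N})
   chi ((m - Q (toZ x)) - dot (lam s0 s1 s2 s3 (toZ x)) (toZ y))).
  apply: eq_bigr => x _; apply: eq_bigr => y _.
  rewrite Eshift -hs.
  set A := Q (toZ x); set D := dot _ _; set B := Q (toZ y).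
  by rewrite (_ : m - (A + D + N%:Z * B) = (m - A - D) + N%:Z * (- B)) ?cP //; ring.
under eq_bigr => x _ do rewrite (linsum hN dc pc).
transitivity (\sum_(x : {ffun 'I_8 -> 'I_N}) (if x \in P then (N ^ 8)%:R * chi m else 0)).
  apply: eq_bigr => x _; rewrite inE /=; case: ifP => // /forallP H; congr (_ * _).
  have := key_div hs hN H; case/dvdzP => q ->.
  by rewrite (_ : m - q * N%:Z = m + N%:Z * (- q)) ?cP //; ring.
rewrite -big_mkcond /= sumr_const -mulr_natl; ring.
Qed.

Lemma Gv0 j : Gv (fun _ => 0) j = 0.
Proof. move: j; apply: forall8; unf; ring. Qed.

Lemma Gv_small N (hN : (0 < N)%N) (x y : {ffun 'I_8 -> 'I_N}) :
  (forall j, (N%:Z %| Gv (fun i => toZ x i - toZ y i) j)%Z) -> x = y.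
Proof.
move=> H.
pose d := fun i => toZ x i - toZ y i.
pose w j := (Gv d j %/ N%:Z)%Z.
have hl : Gv d = (fun j => N%:Z * w j).
  by apply: functional_extensionality => j; rewrite mulrC divzK.
apply/ffunP => i; apply: val_inj => /=.
have : d i = N%:Z * Giv w i by rewrite -(EGi d i) hl EGi_scale.
rewrite /d /toZ => Ei.
have xN := ltn_ord (x i); have yN := ltn_ord (y i).
set q := Giv w i in Ei.
have : q = 0 by nia.
by move=> q0; move: Ei; rewrite q0 mulr0; lia.
Qed.

Lemma kappa_val N chi (hN : (0 < N)%N) : dirichlet_char N chi -> primitive_char N chi ->
  forall k : nat, (forall m, Fs N chi m = k%:R * chi m) -> k = (N ^ 4)%N.
Proof.
move=> dc pc k hk; have cP := chi_per dc.
have dc' := dc; case: dc' => c1 cM _ _.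
pose T m := \sum_(x : {ffun 'I_8 -> 'I_N}) \sum_(y : {ffun 'I_8 -> 'I_N})
   chi (m - Q (toZ x) + Q (toZ y)).
have T1 : T 1 = k%:R * k%:R.
  rewrite /T exchange_big /=.
  transitivity (\sum_(y : {ffun 'I_8 -> 'I_N}) Fs N chi (1 + Q (toZ y))).
    apply: eq_bigr => y _; apply: eq_bigr => x _; congr chi; ring.
  under eq_bigr => y _ do rewrite hk.
  rewrite -mulr_sumr.
  transitivity (k%:R * (chi (-1) * Fs N chi (-1))).
    congr (_ * _); rewrite /Fs mulr_sumr; apply: eq_bigr => y _.
    by rewrite -cM; congr chi; ring.
  rewrite hk; transitivity (k%:R * k%:R * chi ((-1) * (-1))); first by rewrite cM; ring.
  by rewrite mulrNN mulr1 c1 mulr1.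
have T2 : (N ^ 8)%:R * T 1 = (N ^ 8)%:R * (N ^ 8)%:R.
  transitivity (\sum_(z : {ffun 'I_8 -> 'I_N}) T 1).
    by rewrite sumr_const card_ffun8 mulr_natl.
  transitivity (\sum_(z : {ffun 'I_8 -> 'I_N}) \sum_(x : {ffun 'I_8 -> 'I_N})
     \sum_(y : {ffun 'I_8 -> 'I_N})
     chi (1 - Q (vadd (toZ x) (toZ z)) + Q (vadd (toZ y) (toZ z)))).
    apply: eq_bigr => z _; rewrite /T.
    transitivity (\sum_(x : {ffun 'I_8 -> 'I_N}) \sum_(y : {ffun 'I_8 -> 'I_N})
       chi (1 - Q (toZ x) + Q (vadd (toZ y) (toZ z)))).
      apply: eq_bigr => x _; apply: (sum_shift hN (f := fun u => chi (1 - Q (toZ x) + Q u))).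
      move=> u w /=; rewrite Eper.
      set A := Q (toZ x); set D := dot _ _; set B := Q w; set C := Q u.
      by rewrite (_ : 1 - A + (C + N%:Z * (D + N%:Z * B)) = 1 - A + C + N%:Z * (D + N%:Z * B)) ?cP //; ring.
    apply: (sum_shift hN (f := fun u => \sum_(y : {ffun 'I_8 -> 'I_N}) chi (1 - Q u + Q (vadd (toZ y) (toZ z))))).
    move=> u w /=; apply: eq_bigr => y _; rewrite Eper.
    set A := Q u; set D := dot _ _; set B := Q w; set C := Q _.
    by rewrite (_ : 1 - (A + N%:Z * (D + N%:Z * B)) + C = 1 - A + C + N%:Z * (- (D + N%:Z * B))) ?cP //; ring.
  rewrite exchange_big /=.
  transitivity (\sum_(x : {ffun 'I_8 -> 'I_N}) \sum_(y : {ffun 'I_8 -> 'I_N})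
     \sum_(z : {ffun 'I_8 -> 'I_N})
     chi ((1 - Q (toZ x) + Q (toZ y)) - dot (Gv (fun i => toZ x i - toZ y i)) (toZ z))).
    apply: eq_bigr => x _; rewrite exchange_big /=; apply: eq_bigr => y _; apply: eq_bigr => z _.
    congr chi.
    have := Ediff (toZ x) (toZ y) (toZ z).
    set A := Q (vadd _ _); set B := Q (vadd _ _); set D := dot _ _.
    by move=> E; rewrite -[1 - A + B](_ : 1 - (A - B) = _); [rewrite E; ring | ring].
  transitivity (\sum_(x : {ffun 'I_8 -> 'I_N}) (N ^ 8)%:R * chi 1).
    apply: eq_bigr => x _.
    under eq_bigr => y _ do rewrite (linsum hN dc pc).
    rewrite (bigD1 x) //= big1 => [|y yx].
      have -> : [forall j, (N%:Z %| Gv (fun i => toZ x i - toZ x i) j)%Z].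
        apply/forallP => j; rewrite (_ : (fun i => _) = fun i => 0).
          by rewrite Gv0 dvdz0.
        by apply: functional_extensionality => i; rewrite subrr.
      by rewrite addr0; congr (_ * chi _); ring.
    case: ifP => // /forallP H; exfalso; move: yx.
    by rewrite (Gv_small hN H) eqxx.
  by rewrite sumr_const card_ffun8 c1 mulr1 mulr_natl.
have : ((k ^ 2)%N%:R : algC) = ((N ^ 4) ^ 2)%N%:R.
  apply: (mulfI (N8_neq0 hN)); rewrite [((k ^ 2)%N%:R)]natrX expr2 -T1 T2 -expnM; done.
move/eqP; rewrite eqr_nat eqn_exp2r //; exact: eqP.
Qed.

Lemma cond_eq N (hN : (0 < N)%N) (a b c : 'I_N) :
  (((a : nat)%:Z + (b : nat)%:Z + (c : nat)%:Z)%R == 1 %[mod N%:Z])%Z =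
  (c == zmodI hN (1 - ((a : nat)%:Z + (b : nat)%:Z))).
Proof.
have -> : (((a : nat)%:Z + (b : nat)%:Z + (c : nat)%:Z)%R == 1 %[mod N%:Z])%Z =
    ((c : nat)%:Z == 1 - ((a : nat)%:Z + (b : nat)%:Z) %[mod N%:Z])%Z.
  by rewrite -(eqz_modDr ((a : nat)%:Z + (b : nat)%:Z) (c : nat)%:Z) subrK addrC.
have cN := ltn_ord c.
rewrite (modz_small (m := (c : nat)%:Z)); last by lia.
by rewrite -zmodIE eqz_nat.
Qed.

Unset Implicit Arguments.

Theorem lemma4p9 (N : nat) (chi eta : int -> algC) :
  (0 < N)%N ->
  dirichlet_char N chi -> dirichlet_char N eta -> primitive_char N chi ->
  J_J2 N chi eta = (N ^ 4)%:R * J3 N chi chi eta.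
Proof.
move=> hN dc de pc.
have [s0 [s1 [s2 [s3 hs]]]] := four_sq N.
have [k hk] := F_kappa hN dc pc (hs : N%:Z = ssq s0 s1 s2 s3).
have kN := kappa_val hN dc pc hk.
rewrite kN in hk.
have eP := chi_per de.
have dc' := dc; case: dc' => _ cM _ _.
rewrite /J_J2 /J3 mulr_sumr; apply: eq_bigr => a _; rewrite mulr_sumr; apply: eq_bigr => b _.
transitivity (Fs N chi ((a : nat)%:Z * (b : nat)%:Z) * eta (1 - ((a : nat)%:Z + (b : nat)%:Z))).
  by rewrite /Fs mulr_suml; apply: eq_bigr => c _; rewrite /J2_det numq_octN.
rewrite hk (eq_bigl _ _ (cond_eq hN a b)) big_pred1_eq zmodIE.
rewrite [in eta (1 - _)](divz_eq' (1 - ((a : nat)%:Z + (b : nat)%:Z)) N%:Z) eP cM.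
ring.
Qed.
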